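(* Let $B$ be a space and let $f:E\to X$ be a fibrewise map over $B$ between fibrant spaces over $B$. Then $\mathrm{secat}_B(f)=\mathrm{secat}(f)$.
   Context: A fibrewise space over $B$ is a space $X$ with a map $p_X:X\to B$; a fibrewise map $f:X\to Y$ satisfies $p_Yf=p_X$. A fibrant space over $B$ is a fibrewise space whose projection $p_X$ is a Hurewicz fibration. A fibrewise homotopy is a homotopy $H:X\times[0,1]\to Y$ with $p_Y(H(x,t))=p_X(x)$ for all $t$; write $\simeq_B$. $\mathrm{secat}_B(f)$: least $n$ such that $X$ is covered by $n+1$ open sets $U$ each admitting a fibrewise map $s:U\to E$ with $f\circ s\simeq_B$ the inclusion $U\hookrightarrow X$ ($\infty$ if none). $\mathrm{secat}(f)$ (ordinary sectional category of an arbitrary map): least $n$ such that $X$ is covered by $n+1$ open sets $U$ each admitting a map $s:U\to E$ with $f\circ s$ homotopic to the inclusion $U\hookrightarrow X$ ($\infty$ if none). *)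

(* Defs.v *)
From HB Require Import structures.
From mathcomp Require Import all_boot all_order all_algebra.
From mathcomp Require Import all_classical all_reals topology normedtype.
From mathcomp Require Import Rstruct Rstruct_topology.
From Stdlib Require Import Rdefinitions.
Set Implicit Arguments. Unset Strict Implicit. Unset Printing Implicit Defensive.
Local Open Scope classical_set_scope.
Local Open Scope ring_scope.

Definition I01 : set R := `[0%R, 1%R]%classic.

Definition hurewicz_fibration (E B : topologicalType) (p : E -> B) : Prop :=
  continuous p /\
  forall (Z : topologicalType) (g : Z -> E) (h : Z * R -> B),
    continuous g ->
    {within [set: Z] `*` I01, continuous h} ->
    (forall z, h (z, 0%R) = p (g z)) ->
    exists H : Z * R -> E,
      {within [set: Z] `*` I01, continuous H} /\
      (forall z, H (z, 0%R) = g z) /\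
      (forall z t, I01 t -> p (H (z, t)) = h (z, t)).

Definition fibrant (B X : topologicalType) (pX : X -> B) : Prop :=
  hurewicz_fibration pX.

Definition fibrewise_map (B E X : topologicalType) (pE : E -> B) (pX : X -> B)
  (f : E -> X) : Prop := continuous f /\ forall e, pX (f e) = pE e.

(** Maps defined on the
    subspace U are represented by functions on X continuous within U. *)
Definition local_hsection (E X : topologicalType) (f : E -> X) (U : set X) : Prop :=
  exists (s : X -> E) (H : X * R -> X),
    {within U, continuous s} /\
    {within U `*` I01, continuous H} /\
    (forall x, U x -> H (x, 0%R) = f (s x)) /\
    (forall x, U x -> H (x, 1%R) = x).

Definition local_fw_hsection (B E X : topologicalType) (pE : E -> B) (pX : X -> B)
  (f : E -> X) (U : set X) : Prop :=
  exists (s : X -> E) (H : X * R -> X),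
    {within U, continuous s} /\
    (forall x, U x -> pE (s x) = pX x) /\
    {within U `*` I01, continuous H} /\
    (forall x t, U x -> I01 t -> pX (H (x, t)) = pX x) /\
    (forall x, U x -> H (x, 0%R) = f (s x)) /\
    (forall x, U x -> H (x, 1%R) = x).

Definition open_cover_by (X : topologicalType) (P : set X -> Prop) (n : nat) : Prop :=
  exists U : 'I_n.+1 -> set X,
    (forall i, open (U i)) /\ (forall i, P (U i)) /\
    (forall x, exists i, U i x).

(** Least n satisfying P, as a value in nat ∪ {∞} (None = ∞). *)
Definition least_nat (P : nat -> Prop) : option nat :=
  match pselect (exists n, P n) with
  | left h =>
      let h' : exists n, (fun m => `[< P m >]) n :=
        let: ex_intro n Pn := h in ex_intro _ n (asboolT Pn) in
      Some (ex_minn h')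
  | right _ => None
  end.

Definition secat (E X : topologicalType) (f : E -> X) : option nat :=
  least_nat (fun n => open_cover_by (local_hsection f) n).

Definition secat_B (B E X : topologicalType) (pE : E -> B) (pX : X -> B)
  (f : E -> X) : option nat :=
  least_nat (fun n => open_cover_by (local_fw_hsection pE pX f) n).

(* Main.v *)
Require Import Defs.
From mathcomp Require Import all_boot all_order all_algebra all_classical all_reals topology.
From mathcomp Require Import normedtype Rstruct Rstruct_topology lra.
From Stdlib Require Import Rdefinitions BinNums.
Set Implicit Arguments. Unset Strict Implicit. Unset Printing Implicit Defensive.
Local Open Scope classical_set_scope.
Local Open Scope ring_scope.
Import Order.TTheory GRing.Theory Num.Theory.

Lemma fst_cont {T U : topologicalType} : continuous (@fst T U).
Proof. move=> p; exact: cvg_fst. Qed.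
Lemma snd_cont {T U : topologicalType} : continuous (@snd T U).
Proof. move=> p; exact: cvg_snd. Qed.

Lemma within_comp {T U V : topologicalType} (A : set T) (B : set U)
  (f : T -> U) (g : U -> V) : (forall x, A x -> B (f x)) ->
  {within A, continuous f} -> {within B, continuous g} ->
  {within A, continuous (g \o f)}.
Proof.
move=> AB /subspace_continuousP cf /subspace_continuousP cg.
apply/subspace_continuousP => x Ax.
have cf' : f @ within A (nbhs x) --> within B (nbhs (f x)).
  move=> P /= BP.
  have := cf x Ax _ BP.
  rewrite !nbhs_simpl /= => H.
  apply: (filterS2 _ _ (withinT _ (nbhs_filter x)) H) => y Ay /=; apply; exact: AB.
exact: (cvg_comp _ _ cf' (cg _ (AB x Ax))).
Qed.

Lemma within_pair {T U V : topologicalType} (A : set T)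
  (f : T -> U) (g : T -> V) :
  {within A, continuous f} -> {within A, continuous g} ->
  {within A, continuous (fun x => (f x, g x))}.
Proof.
move=> /subspace_continuousP cf /subspace_continuousP cg.
apply/subspace_continuousP => x Ax.
exact: cvg_pair (cf x Ax) (cg x Ax).
Qed.

Lemma within_setT {T U : topologicalType} (f : T -> U) :
  {within setT, continuous f} -> continuous f.
Proof.
move=> /subspace_continuousP cf x.
have := cf x I; by rewrite withinET.
Qed.

Lemma id_sub_cont {T : topologicalType} (A : set T) :
  continuous (fun x : subspace A => (x : T)).
Proof.
move=> x; rewrite /continuous_at; case: (nbhs_subspaceP A x) => Ax.
  exact: cvg_within.
move=> P /= /nbhs_singleton Px y -> //.
Qed.

Lemma into_sub_cont {T Y : topologicalType} (B : set Y) (f : T -> Y) :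
  continuous f -> (forall x, B (f x)) -> continuous (f : T -> subspace B).
Proof.
move=> cf fB x; rewrite /continuous_at.
apply/(@subspace_cvgP _ B _ (f x) _ (fB x)) => P /= BP.
have := cf x _ BP; rewrite !nbhs_simpl /=; apply: filterS => z Hz; exact: Hz (fB z).
Qed.

Lemma within_id_sub {T : topologicalType} (A : set T) :
  {within A, continuous (fun x : T => (x : subspace A))}.
Proof.
apply/subspace_continuousP => x Ax.
apply/(@subspace_cvgP _ A _ x _ Ax).
exact: cvg_id.
Qed.
Lemma in_conv {T Y : topologicalType} (A : set T) (h : T * R -> Y) :
  {within A `*` I01, continuous h} ->
  (forall z t, ~ A z -> h (z, t) = h (z, 0%R)) ->
  {within [set: subspace A] `*` I01, continuous (h : subspace A * R -> Y)}.
Proof.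
move=> /subspace_continuousP hc hcst.
apply/subspace_continuousP => -[z t] [_ It].
case: (pselect (A z)) => Az.
  have Hc := hc (z, t) (conj Az It).
  apply: cvg_trans Hc; apply: cvg_app.
  move=> P [[Q1 Q2] [/= nQ1 nQ2] sub].
  rewrite nbhs_simpl /within /=.
  exists (A `&` Q1, Q2); first split => //=.
    apply/(@nbhs_subspace_ex _ A _ z Az); exists Q1 => //.
    by rewrite setIAC setIid setIC.
  move=> [y1 y2] [[/= Ay1 Q1y1] Q2y2] [_ Iy2].
  exact: (sub (y1, y2) (conj Q1y1 Q2y2) (conj Ay1 Iy2)).
move=> N /= /nbhs_singleton Nh; rewrite nbhs_simpl /within /=.
exists ([set z], setT); first split => //=.
  by case: (nbhs_subspaceP A z) => // _ y.
  exact: filterT.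
move=> [y1 y2] [/= -> _] _ /=.
rewrite /from_subspace in Nh *; by rewrite hcst // -(hcst z t).
Qed.


Lemma out_conv {T Y : topologicalType} (A : set T) (H : T * R -> Y) :
  {within [set: subspace A] `*` I01, continuous (H : subspace A * R -> Y)} ->
  {within A `*` I01, continuous H}.
Proof.
move=> cH.
have K : {within A `*` I01, continuous
   (H \o (fun p : T * R => ((p.1 : subspace A), p.2) : subspace A * R))}.
  apply: (@within_comp _ _ _ (A `*` I01) ([set: subspace A] `*` I01)) => //.
  by move=> [x t] [_ It].
apply: within_pair.
  apply: (@within_comp _ _ _ _ A fst (fun x : T => x : subspace A)).
  - by move=> [] ? ? [].
  - exact: continuous_subspaceT fst_cont.
  - exact: within_id_sub.
exact: continuous_subspaceT snd_cont.
by apply: (subspace_eq_continuous _ K); move=> [].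
Qed.

Lemma out_conv1 {T Y : topologicalType} (A : set T) (S : T * R -> Y) (t0 : R) :
  I01 t0 ->
  {within [set: subspace A] `*` I01, continuous (S : subspace A * R -> Y)} ->
  {within A, continuous (fun x => S (x, t0))}.
Proof.
move=> It0 cS.
have := @within_comp _ _ _ A ([set: subspace A] `*` I01)
  (fun x : T => ((x : subspace A), t0) : subspace A * R) S.
move=> K; apply: K => //.
apply: within_pair; first exact: within_id_sub.
apply: continuous_subspaceT; exact: cst_continuous.
Qed.
Definition clamp (t : R) : R := Num.max 0 (Num.min t 1).

Lemma I01E t : I01 t <-> (0 <= t /\ t <= 1).
Proof. rewrite /I01 /= in_itv /=; split; [by move/andP | by move=> [-> ->]]. Qed.

Lemma clampE t : clamp t = if t <= 0 then 0 else if t <= 1 then t else 1.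
Proof.
rewrite /clamp maxEle minEle.
case: (lerP t 0) => h0; case: (lerP t 1) => h1; case: ifP => h2 //; try lra.
all: by apply/eqP; rewrite eq_le; apply/andP; split; lra.
Qed.

Lemma clampI t : I01 (clamp t).
Proof. apply/I01E; rewrite clampE; case: (lerP t 0) => ?; case: (lerP t 1) => ?; split; lra. Qed.

Lemma clamp_id t : I01 t -> clamp t = t.
Proof. move/I01E=> [h0 h1]; rewrite clampE; case: (lerP t 0) => ?; case: (lerP t 1) => ?; lra. Qed.

Lemma clamp_cont : continuous clamp.
Proof.
have -> : clamp = (fun _ => (0:R)) \max ((fun x : R => x) \min (fun _ => (1:R))).
  by apply: funext => x.
move=> x; apply: continuous_max; first exact: cst_continuous.
apply: continuous_min; [exact: cvg_id | exact: cst_continuous].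
Qed.


Lemma aff_cont (k m : R) : continuous (fun x : R => k * x + m).
Proof.
move=> x.
have hk : {for x, continuous (fun x : R => k * x)}.
  have := @continuousM R R (fun _ => k) (fun x => x) x (@cst_continuous _ _ k x) (@cvg_id _ _).
  by [].
have := @continuousD R R^o R (fun x : R => k * x) (fun _ => m) x hk (@cst_continuous _ _ m x).
by [].
Qed.

Lemma cont_comp {T U V : topologicalType} (f : T -> U) (g : U -> V) :
  continuous f -> continuous g -> continuous (g \o f).
Proof. move=> cf cg x; exact: continuous_comp (cf x) (cg (f x)). Qed.

Definition phi (p : R * R) : R :=
  Num.max (Num.max ((-2) * p.1 + 1) (2 * p.1 + (-1))) p.2.
Definition aw (w : R) : R := clamp (GRing.add (3 * w) (-1)).
Definition bw (w : R) : R := clamp (Num.min (3 * w + 0) ((-3) * w + 3)).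

Lemma max_cont {T : topologicalType} (f g : T -> R) :
  continuous f -> continuous g -> continuous (fun x => Num.max (f x) (g x)).
Proof. move=> cf cg x; have := @continuous_max R T f g x (cf x) (cg x); by []. Qed.
Lemma min_cont {T : topologicalType} (f g : T -> R) :
  continuous f -> continuous g -> continuous (fun x => Num.min (f x) (g x)).
Proof. move=> cf cg x; have := @continuous_min R T f g x (cf x) (cg x); by []. Qed.

Lemma phi_cont : continuous phi.
Proof.
apply: max_cont; last exact: snd_cont.
apply: max_cont.
  exact: (cont_comp fst_cont (@aff_cont (-2) 1)).
exact: (cont_comp fst_cont (@aff_cont 2 (-1))).
Qed.

Lemma aw_cont : continuous aw.
Proof. exact: cont_comp (@aff_cont 3 (-1)) clamp_cont. Qed.
Lemma bw_cont : continuous bw.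
Proof.
apply: (cont_comp _ clamp_cont).
by apply: min_cont; exact: aff_cont.
Qed.

Lemma clamp0 t : t <= 0 -> clamp t = 0.
Proof. by move=> h; rewrite clampE h. Qed.
Lemma clamp1 t : 1 <= t -> clamp t = 1.
Proof. move=> h; rewrite clampE; case: (lerP t 0) => ?; case: (lerP t 1) => ?; lra. Qed.

Lemma phi_b1 a : 0 <= a -> a <= 1 -> phi (a, 1) = 1.
Proof.
move=> h0 h1; rewrite /phi /=.
rewrite (maxEle (-2 * a + 1)); case: lerP => ?; rewrite maxEle; case: lerP => ?; lra.
Qed.

Lemma phi_a0 b : 0 <= b -> b <= 1 -> phi (0, b) = 1.
Proof.
move=> h0 h1; rewrite /phi /=.
rewrite (maxEle (-2 * 0 + 1)); case: lerP => ?; rewrite maxEle; case: lerP => ?; lra.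
Qed.

Lemma phi_a1 b : 0 <= b -> b <= 1 -> phi (1, b) = 1.
Proof.
move=> h0 h1; rewrite /phi /=.
rewrite (maxEle (-2 * 1 + 1)); case: lerP => ?; rewrite maxEle; case: lerP => ?; lra.
Qed.

Lemma phi_awbw w : I01 w -> phi (aw w, bw w) = 1.
Proof.
move=> /I01E [h0 h1].
have /I01E [b0 b1] := clampI (Num.min (3 * w + 0) ((-3) * w + 3)).
have /I01E [a0 a1] := clampI (GRing.add (3 * w) (-1)).
rewrite /aw /bw.
case: (lerP (GRing.add (3 * w) (-1)) 0) => ha.
  by rewrite (clamp0 ha) phi_a0.
case: (lerP 1 (GRing.add (3 * w) (-1))) => hb.
  by rewrite (clamp1 hb) phi_a1.
rewrite (@clamp1 (Num.min _ _)) ?phi_b1 //.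
rewrite le_min; apply/andP; split; lra.
Qed.

Lemma R0E : IZR Z0 = 0 :> R. Proof. by []. Qed.
Lemma R1E : IZR (Zpos xH) = 1 :> R. Proof. by []. Qed.
Lemma aw0 : aw 0 = 0. Proof. rewrite /aw R0E clamp0 //; lra. Qed.
Lemma bw0 : bw 0 = 0.
Proof. rewrite /bw R0E clamp0 // ge_min; apply/orP; left; lra. Qed.
Lemma aw1 : aw 1 = 1. Proof. rewrite /aw R1E clamp1 //; lra. Qed.
Lemma bw1 : bw 1 = 0.
Proof. rewrite /bw R1E clamp0 // ge_min; apply/orP; right; lra. Qed.

Lemma cont_pair {T U V : topologicalType} (f : T -> U) (g : T -> V) :
  continuous f -> continuous g -> continuous (fun x => (f x, g x)).
Proof. move=> cf cg x; exact: cvg_pair (cf x) (cg x). Qed.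

Definition d1 (v : R) : R := GRing.add (GRing.mul (-2) v) 1.
Definition d2 (v : R) : R := GRing.add (GRing.mul 2 v) (-1).

Lemma d1_cont : continuous d1. Proof. exact: (@aff_cont (-2) 1). Qed.
Lemma d2_cont : continuous d2. Proof. exact: (@aff_cont 2 (-1)). Qed.

Lemma phi0 v : phi (v, 0) = if v <= 2^-1 then d1 v else d2 v.
Proof.
rewrite /phi /d1 /d2 /= (maxEle (-2 * v + 1)).
case: (lerP (-2 * v + 1) (2 * v + -1)) => h1; rewrite maxEle;
  case: (lerP v (2^-1)) => h; case: lerP => ?; lra.
Qed.

Lemma d1half : d1 (2^-1) = 0. Proof. rewrite /d1; lra. Qed.
Lemma d2half : d2 (2^-1) = 0. Proof. rewrite /d2; lra. Qed.
Lemma d1_0 : d1 0 = 1. Proof. rewrite /d1 R0E; lra. Qed.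
Lemma d2_1 : d2 1 = 1. Proof. rewrite /d2 R1E; lra. Qed.
Lemma I01_0 : I01 0. Proof. by apply/I01E; rewrite ?R0E; split; lra. Qed.
Lemma I01_1 : I01 1. Proof. by apply/I01E; rewrite ?R1E; split; lra. Qed.
Lemma clamp0' : clamp 0 = 0. Proof. by rewrite ?R0E clamp_id //; exact: I01_0. Qed.
Lemma clamp1' : clamp 1 = 1. Proof. by rewrite ?R1E clamp_id //; exact: I01_1. Qed.
Lemma clamp0r : clamp (GRing.zero : R) = 0.
Proof. by rewrite clamp_id //; apply/I01E; split; lra. Qed.
Lemma clamp1r : clamp (GRing.one _ : R) = 1.
Proof. by rewrite clamp_id //; apply/I01E; split; lra. Qed.
Lemma d1_0r : d1 (GRing.zero : R) = 1. Proof. rewrite /d1; lra. Qed.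
Lemma d2_1r : d2 (GRing.one _ : R) = 1. Proof. rewrite /d2; lra. Qed.
Lemma clampK t : clamp (clamp t) = clamp t.
Proof. exact: clamp_id (clampI t). Qed.

Lemma hsection_fw (B E X : topologicalType) (pE : E -> B) (pX : X -> B)
  (f : E -> X) (U : set X) :
  fibrant pE -> fibrant pX -> fibrewise_map pE pX f ->
  local_hsection f U -> local_fw_hsection pE pX f U.
Proof.
move=> [cpE liftE] [cpX liftX] [cf fw] [s [H [cs [cH [H0 H1]]]]].
rewrite ?R0E in H0; rewrite ?R1E in H1.
pose Z := subspace U.
pose Ht : X * R -> X := fun p => if `[< U p.1 >] then H p else f (s p.1).
have cHt : {within U `*` I01, continuous Ht}.
  apply: (subspace_eq_continuous _ cH) => -[x t]; rewrite inE => -[/= Ux _].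
  by rewrite /from_subspace /Ht /= (asboolT Ux).
have cHtZ := in_conv cHt (fun z t nUz => ltac:(by rewrite /Ht /= (asboolF nUz))).
pose Hc : X * R -> X := fun p => Ht (p.1, clamp p.2).
have cHc : continuous (Hc : Z * R -> X).
  apply: within_setT.
  have := @within_comp _ _ _ [set: Z * R] ([set: Z] `*` I01)
    (fun p : Z * R => (p.1, clamp p.2)) Ht.
  apply => //.
    by move=> p _; split => //; exact: clampI.
  apply: continuous_subspaceT; apply: cont_pair; first exact: fst_cont.
  exact: cont_comp snd_cont clamp_cont.
pose hA : X * R -> B := fun p => pX (Hc p).
have chA : continuous (hA : Z * R -> B) by exact: cont_comp cHc cpX.
have Ht0 : forall z : X, Ht (z, 0) = f (s z).
  move=> z; rewrite /Ht /=; case: (pselect (U z)) => Uz.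
    by rewrite (asboolT Uz) H0.
  by rewrite (asboolF Uz).
have [S [cS [S0 pS]]] : exists (S : (Z * R)%type -> E),
    {within [set: Z] `*` I01, continuous S} /\
    (forall z, S (z, 0) = s z) /\
    (forall z t, I01 t -> pE (S (z, t)) = hA (z, t)).
  apply: (liftE Z s hA) => //.
    exact: continuous_subspaceT chA.
  move=> z; rewrite /hA /Hc /= R0E clamp0' Ht0; exact: fw.
rewrite ?R0E in S0.
pose s' : X -> E := fun x => S (x, 1%R).
have cs' : {within U, continuous s'} := out_conv1 I01_1 cS.
have Ht1 : forall x, U x -> Ht (x, 1) = x.
  by move=> x Ux; rewrite /Ht /= (asboolT Ux) H1.
have ps' : forall x, U x -> pE (s' x) = pX x.
  move=> x Ux; rewrite /s' pS; last exact: I01_1.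
  by rewrite /hA /Hc /= R1E clamp1' Ht1.
pose Sc : X * R -> E := fun p => S (p.1, clamp p.2).
have cSc : continuous (Sc : Z * R -> E).
  apply: within_setT.
  have := @within_comp _ _ _ [set: Z * R] ([set: Z] `*` I01)
    (fun p : Z * R => (p.1, clamp p.2)) S.
  apply => //.
    by move=> p _; split => //; exact: clampI.
  apply: continuous_subspaceT; apply: cont_pair; first exact: fst_cont.
  exact: cont_comp snd_cont clamp_cont.
pose K : X * R -> X := fun p =>
  if p.2 <= 2^-1 then f (Sc (p.1, d1 p.2)) else Hc (p.1, d2 p.2).
have cK : continuous (K : Z * R -> X).
  apply: within_setT.
  have -> : [set: (Z * R)%type] =
      [set p : Z * R | p.2 <= 2^-1] `|` [set p : Z * R | 2^-1 <= p.2].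
    apply/seteqP; split => // p _ /=.
    by case: (lerP p.2 (2^-1)) => h; [left | right; exact: ltW].
  apply: withinU_continuous.
  - change (closed ((@snd Z R) @^-1` [set x : R | x <= 2^-1])).
    apply: preimage_closed; last exact: closed_le.
    by move=> p _; exact: snd_cont.
  - change (closed ((@snd Z R) @^-1` [set x : R | 2^-1 <= x])).
    apply: preimage_closed; last exact: closed_ge.
    by move=> p _; exact: snd_cont.
  - have cg : continuous (fun p : Z * R => f (Sc (p.1, d1 p.2))).
      apply: cont_comp _ cf; apply: cont_comp _ cSc.
      exact: cont_pair fst_cont (cont_comp snd_cont d1_cont).
    apply: (subspace_eq_continuous _ (continuous_subspaceT cg)).
    by move=> [x v]; rewrite inE /= => h; rewrite /from_subspace /K /= h.
  - have cg : continuous (fun p : Z * R => Hc (p.1, d2 p.2)).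
      apply: cont_comp _ cHc.
      exact: cont_pair fst_cont (cont_comp snd_cont d2_cont).
    apply: (subspace_eq_continuous _ (continuous_subspaceT cg)).
    move=> [x v]; rewrite inE /= => h; rewrite /from_subspace /K /=.
    case: ifP => // h'.
    have -> : v = 2^-1 by apply/eqP; rewrite eq_le h h'.
    by rewrite d1half d2half /Sc /Hc /= clamp0r S0 Ht0.
pose Z2 := subspace ([set: Z] `*` I01).
have cKZ2 : continuous (K : Z2 -> X) := continuous_subspaceT cK.
pose h : (X * R) * R -> B := fun q => pX (Hc (q.1.1, phi (q.1.2, q.2))).
have ch : continuous (h : (Z2 * R)%type -> B).
  apply: cont_comp _ cpX; apply: cont_comp _ cHc; apply: cont_pair.
    exact: (cont_comp (cont_comp (@fst_cont Z2 R) (@id_sub_cont _ ([set: Z] `*` I01))) (@fst_cont Z R)).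
  apply: cont_comp _ phi_cont; apply: cont_pair; last exact: snd_cont.
  exact: (cont_comp (cont_comp (@fst_cont Z2 R) (@id_sub_cont _ ([set: Z] `*` I01))) (@snd_cont Z R)).
have h0 : forall q : Z2, h (q, 0) = pX (K q).
  move=> [x v]; rewrite /h /K /= phi0; case: ifP => hv //.
  rewrite /Sc fw pS; last exact: clampI.
  by rewrite /hA /Hc /= (clamp_id (clampI (d1 v))).
have [M [cM [M0 pM]]] : exists (M : (Z2 * R)%type -> X),
    {within [set: Z2] `*` I01, continuous M} /\
    (forall q, M (q, 0) = K q) /\
    (forall q t, I01 t -> pX (M (q, t)) = h (q, t)).
  apply: (liftX Z2 K h cKZ2) => //.
  exact: continuous_subspaceT ch.
pose H' : X * R -> X := fun p => M ((p.1, aw p.2), bw p.2).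
exists s', H'; split; first exact: cs'.
split; first exact: ps'.
split.
  apply: out_conv.
  have := @within_comp _ _ _ ([set: Z] `*` I01) ([set: Z2] `*` I01)
    (fun p : Z * R => (((p.1, aw p.2) : Z2), bw p.2) : (Z2 * R)%type) M.
  apply => //.
    by move=> p [_ It]; split => //; exact: clampI.
  apply: continuous_subspaceT; apply: cont_pair.
    apply: into_sub_cont.
      exact: cont_pair fst_cont (cont_comp snd_cont aw_cont).
    by move=> p; split => //; exact: clampI.
  exact: cont_comp snd_cont bw_cont.
split.
  move=> x t Ux It; rewrite /H' /= pM; last exact: clampI.
  by rewrite /h /= phi_awbw // /Hc /= clamp1r Ht1.
split.
  move=> x Ux; rewrite /H' /= aw0 bw0 M0 /K /= ifT; last by lra.
  by rewrite d1_0r /Sc /= clamp1r /s' R1E.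
move=> x Ux; rewrite /H' /= aw1 bw1 M0 /K /= ifF; last first.
  by apply/negbTE; rewrite -ltNge; lra.
by rewrite d2_1r /Hc /= clamp1r Ht1.
Qed.

Theorem theorem2p9 (B E X : topologicalType) (pE : E -> B) (pX : X -> B)
  (f : E -> X) :
  fibrant pE -> fibrant pX -> fibrewise_map pE pX f ->
  secat_B pE pX f = secat f.
Proof.
move=> fE fX fw.
rewrite /secat_B /secat.
have e : local_fw_hsection pE pX f = local_hsection f.
  apply: funext => U; apply: propext; split.
    by move=> [s [H [cs [_ [cH [_ [H0 H1]]]]]]]; exists s, H.
  exact: hsection_fw.
by rewrite e.
Qed.
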